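(* Let $G$ be a graph with maximum degree $2$ and $k$ a positive integer. If $G$ has no path components with at least $k-1$ vertices and $0<s(G,P_k)\le 2k+1$, then $G$ has exactly one component with more than $k$ vertices, and this component is a cycle with $s(G,P_k)$ vertices.
   Context: $P_k$ is the path with $k$ vertices; $s(G,H)$ is the number of vertex subsets $X\subseteq V(G)$ such that $G[X]$ is isomorphic to $H$. *)

(* Defs.v *)
From mathcomp Require Import all_boot.
Set Implicit Arguments. Unset Strict Implicit. Unset Printing Implicit Defensive.

(* A finite simple graph: vertex type T : finType, adjacency e : rel T,
   assumed symmetric and irreflexive in the theorem. *)

Definition path_rel (n : nat) : rel 'I_n :=
  fun i j => (i.+1 == j :> nat) || (j.+1 == i :> nat).

Arguments path_rel n : clear implicits.

(* Cycle C_n on vertices 'I_n (meaningful for n >= 3): i ~ i+1 mod n. *)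
Definition cycle_rel (n : nat) : rel 'I_n :=
  fun i j => ((i.+1 %% n) == j :> nat) || ((j.+1 %% n) == i :> nat).

Arguments cycle_rel n : clear implicits.

Definition induced_iso (T : finType) (e : rel T) (X : {set T}) (n : nat)
  (h : rel 'I_n) : bool :=
  [exists f : {ffun 'I_n -> T},
     [&& injectiveb f, f @: setT == X &
        [forall i, forall j, e (f i) (f j) == h i j]]].

Definition s_path (T : finType) (e : rel T) (k : nat) : nat :=
  #|[set X : {set T} | induced_iso e X (path_rel k)]|.

Definition degree (T : finType) (e : rel T) (x : T) : nat := #|[set y | e x y]|.

Definition max_degree_two (T : finType) (e : rel T) : Prop :=
  (forall x, degree e x <= 2) /\ exists x, degree e x = 2.

Definition components (T : finType) (e : rel T) : {set {set T}} :=
  [set [set y | connect e x y] | x : T].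

Definition is_path_set (T : finType) (e : rel T) (C : {set T}) : bool :=
  induced_iso e C (path_rel #|C|).

Definition is_cycle_set (T : finType) (e : rel T) (C : {set T}) : bool :=
  (3 <= #|C|) && induced_iso e C (cycle_rel #|C|).

(* Main.v *)
Require Import Defs.
From mathcomp Require Import all_boot.
From mathcomp Require Import zify.
Set Implicit Arguments. Unset Strict Implicit. Unset Printing Implicit Defensive.

Definition compo (T : finType) (e : rel T) x := [set y | connect e x y].

Definition cyc (T : finType) (e : rel T) (C : {set T}) m (c : nat -> T) :=
  [/\ 2 < m, forall a b, (c a == c b) = (a == b %[mod m]),
      forall a y, e (c a) y = (y == c a.+1) || (y == c (a + m.-1)) &
      C = [set c (nat_of_ord i) | i in [set: 'I_m]]].

Lemma deg2 (T : finType) (e : rel T) x a b y : degree e x <= 2 -> e x a -> e x b -> a != b -> e x y ->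
  (y == a) || (y == b).
Proof.
move=> hd ha hb ab hy; apply/negPn/negP => hn.
have: #|y |: [set a; b]| <= 2.
  apply: leq_trans hd; apply: subset_leq_card; apply/subsetP => z; rewrite !inE.
  by case/or3P => /eqP ->; rewrite ?ha ?hb ?hy.
have hn' := negbTE hn.
by rewrite cardsU1 cards2 ab !inE hn'.
Qed.

Lemma maxpath (T : finType) (e : rel T) x : exists h q, [/\ connect e x h, path e h q, uniq (h :: q) &
  forall h' q', connect e x h' -> path e h' q' -> uniq (h' :: q') -> size q' <= size q].
Proof.
pose P n := [exists h, exists t : n.-tuple T, [&& connect e x h, path e h t & uniq (h :: t)]].
have exP : exists n, P n.
  exists 0; apply/existsP; exists x; apply/existsP; exists [tuple]; by rewrite connect0.
have ubP : forall n, P n -> n <= #|T|.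
  move=> n /existsP [h /existsP [t /and3P [_ _ u]]].
  move/card_uniqP: u => u; have := max_card (mem (h :: tval t)).
  rewrite u /= size_tuple; lia.
case: (ex_maxnP exP ubP) => n /existsP [h /existsP [t /and3P [c p u]]] mx.
exists h, t; split => // h' q' c' p' u'; rewrite size_tuple; apply: mx.
apply/existsP; exists h'; apply/existsP; exists (in_tuple q'); by rewrite c' p' u'.
Qed.

Lemma modS_if a n : 0 < n -> a.+1 %% n = if (a %% n).+1 == n then 0 else (a %% n).+1.
Proof.
move=> n0; rewrite -addn1 -modnDml; have : a %% n < n by lia.
case: eqP => [e1 _| ne lt]; first by rewrite addn1 e1 modnn.
rewrite modn_small; lia.
Qed.

Lemma modP_if a n : 0 < n -> (a + n.-1) %% n = if a %% n == 0 then n.-1 else (a %% n).-1.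
Proof.
move=> n0; rewrite -modnDml; have : a %% n < n by lia.
case: eqP => [-> _| ne lt]; first by rewrite add0n modn_small; lia.
have -> : a %% n + n.-1 = (a %% n).-1 + n by lia.
rewrite modnDr modn_small; lia.
Qed.

Lemma classify (T : finType) (e : rel T) x : symmetric e -> irreflexive e -> (forall y, degree e y <= 2) ->
  is_path_set e (compo e x) \/ exists c, cyc e (compo e x) #|compo e x| c.
Proof.
move=> sym irr deg.
have [h [q [cxh pq uq mx]]] := maxpath e x.
set s := h :: q. set n := size s.
have sE : size s = n by []. have nE : n = (size q).+1 by []. clearbody n.
have n0 : 0 < n by rewrite nE.
pose S i := nth h s i.
have uS : forall i j, i < n -> j < n -> (S i == S j) = (i == j) by move=> i j hi hj; apply: nth_uniq; rewrite ?sE.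
have Sinj : forall i j, i < n -> j < n -> S i = S j -> i = j.
  by move=> i j hi hj /eqP; rewrite uS // => /eqP.
have edge : forall i, i.+1 < n -> e (S i) (S i.+1).
  by move=> i hi; move/pathP: pq => /(_ h i); apply; lia.
have interior : forall i y, 0 < i -> i.+1 < n -> e (S i) y -> (y == S i.-1) || (y == S i.+1).
  move=> i y i0 hi hy; apply: deg2 (deg _) _ _ _ hy.
  - rewrite sym; have := edge i.-1; rewrite prednK //; apply; lia.
  - exact: edge.
  - rewrite uS; lia.
have inS : forall y, (y \in s) -> exists2 i, i < n & y = S i.
  by move=> y /(nthP h) [i hi <-]; exists i; rewrite -?sE.
have Sin : forall i, i < n -> S i \in s by move=> i hi; apply: mem_nth; rewrite sE.
have last_eq : S (size q) = last h q by rewrite /S -[last h q]/(last h s) -nth_last.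
have closed : forall u y, u \in s -> e u y -> y \in s.
  move=> u y /inS [i hi ->] hy; apply/negPn/negP => ny.
  case: (posnP i) => [i0| ip].
  - subst i; have := mx y s (connect_trans cxh (connect1 hy)).
    have hy' : e h y := hy.
    have p1 : path e y s by rewrite /= sym hy' pq.
    have u1 : uniq (y :: s) by rewrite cons_uniq ny uq.
    move=> H; move: (H p1 u1).
    by rewrite /= ltnn.
  - case: (ltnP i.+1 n) => hin.
    + have : y \in s by case/orP: (interior i y ip hin hy) => /eqP ->; apply: mem_nth; rewrite sE; lia.
      by rewrite (negbTE ny).
    + have hiq : i = size q by lia.
      have := mx h (rcons q y) cxh; rewrite rcons_path pq -last_eq -hiq hy.
      rewrite -rcons_cons rcons_uniq ny uq size_rcons; move=> H; have := H isT isT; lia.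
have conn_s : forall i, i < n -> connect e x (S i).
  by move=> i hi; apply: connect_trans cxh (path_connect pq (mem_nth h _)); rewrite sE.
have cl := intro_closed (sym_connect_sym sym) (fun u v huv hu => closed u v hu huv).
have compE : compo e x = [set y | y \in s].
  apply/setP => y; rewrite /compo !in_set; apply/idP/idP.
  - move=> cxy; rewrite -(closed_connect cl cxy) (closed_connect cl cxh).
    by rewrite mem_head.
  - by move=> /inS [i hi ->]; exact: conn_s.
have cardC : #|compo e x| = n by rewrite compE cardsE -sE; apply/card_uniqP.
have echar : forall i j, i < n -> j < n -> e (S i) (S j) ->
    [|| i.+1 == j, j.+1 == i, (i == 0) && (j == n.-1) | (j == 0) && (i == n.-1)].
  move=> i j hi hj hij.
  have ij : i != j by apply/eqP => eij; subst; rewrite irr in hij.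
  case: (boolP ((0 < i) && (i.+1 < n))) => [/andP [i0 i1]|ni].
    case/orP: (interior i _ i0 i1 hij) => /eqP /Sinj H; rewrite H; lia.
  case: (boolP ((0 < j) && (j.+1 < n))) => [/andP [j0 j1]|nj].
    rewrite sym in hij.
    case/orP: (interior j _ j0 j1 hij) => /eqP /Sinj H; rewrite H; lia.
  lia.
case: (boolP (e h (last h q) && (2 < n))) => [/andP [hl n2] | nb].
  right; exists (fun a => S (a %% n)); rewrite cardC; split => //.
  - by move=> a b; rewrite uS //; apply: ltn_pmod.
  - move=> a y; apply/idP/idP.
    + move=> hy; have ys : y \in s := closed _ _ (Sin _ (ltn_pmod a n0)) hy.
      case/inS: ys => j hj Ey; rewrite Ey in hy *.
      have := echar _ _ (ltn_pmod a n0) hj hy.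
      rewrite !uS ?ltn_pmod // modS_if // modP_if //.
      case: ifP; case: ifP; lia.
    + case/orP => /eqP ->.
      * rewrite modS_if //; case: ifP => [/eqP hn | hn].
          have -> : a %% n = size q by lia.
          by rewrite last_eq sym.
        apply: edge; lia.
      * rewrite modP_if //; case: ifP => [/eqP h0 | h0].
          by rewrite h0 (_ : n.-1 = size q) ?last_eq // nE.
        rewrite sym; have := edge (a %% n).-1; rewrite prednK; [apply|]; lia.
  - apply/setP => y; rewrite compE inE; apply/idP/imsetP.
    + move/inS => [i hi ->]; exists (Ordinal hi); first by rewrite inE.
      by rewrite /= modn_small.
    + by move=> [i _ ->]; apply: Sin; apply: ltn_pmod.
left; rewrite /is_path_set cardC; apply/existsP; exists [ffun i : 'I_n => S i].
apply/and3P; split.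
- by apply/injectiveP => i j; rewrite !ffunE => /Sinj H; apply: val_inj; apply: H.
- apply/eqP/setP => y; rewrite compE inE; apply/imsetP/idP.
  + by move=> [i _ ->]; rewrite ffunE; apply: Sin.
  + by move/inS => [i hi ->]; exists (Ordinal hi); rewrite ?inE ?ffunE.
- apply/forallP => i; apply/forallP => j; rewrite !ffunE /path_rel; apply/eqP; apply/idP/idP.
  + move=> hij; have := echar _ _ (ltn_ord i) (ltn_ord j) hij.
    have ij : nat_of_ord i != nat_of_ord j by apply/eqP => eij; rewrite eij irr in hij.
    case: (boolP ((i.+1 == j :> nat) || (j.+1 == i :> nat))) => // nadj.
    move=> H; have hi := ltn_ord i; have hj := ltn_ord j.
    have lastS : nth h s (size q) = last h q := last_eq.
    have key : e h (last h q).
      case/or4P: H => [/eqP H|/eqP H|/andP [/eqP H1 /eqP H2]|/andP [/eqP H1 /eqP H2]]; try lia.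
      - move: hij; rewrite /S H1 H2 (_ : n.-1 = size q); last by lia.
        by rewrite lastS.
      - move: hij; rewrite /S H1 H2 (_ : n.-1 = size q); last by lia.
        by rewrite lastS sym.
    have n2 : 2 < n.
      case/or4P: H => [/eqP H|/eqP H|/andP [/eqP H1 /eqP H2]|/andP [/eqP H1 /eqP H2]]; lia.
    by move: nb; rewrite key n2.
  + by case/orP => /eqP H; [rewrite -H; apply: edge; rewrite H | rewrite sym -H; apply: edge; rewrite H].
Qed.

Definition pathfun (T : finType) (e : rel T) (G : nat -> T) k :=
  (forall a b, a < k -> b < k -> G a = G b -> a = b) /\
  (forall a b, a < k -> b < k -> e (G a) (G b) = (a.+1 == b) || (b.+1 == a)).

Lemma induced_pathP (T : finType) (e : rel T) X k : 0 < k ->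
  induced_iso e X (path_rel k) <->
  exists G, pathfun e G k /\ X = [set G (nat_of_ord j) | j in [set: 'I_k]].
Proof.
case: k => // k _; split.
- move=> /existsP [f /and3P [/injectiveP inj /eqP him /forallP H]].
  exists (fun n => f (inord n)); split; first split.
  + move=> a b ha hb /inj /(congr1 (@nat_of_ord _)); rewrite !inordK //.
  + move=> a b ha hb; have := H (inord a) => /forallP /(_ (inord b)) /eqP ->.
    by rewrite /path_rel !inordK.
  + rewrite -him; apply: eq_imset => j /=; by rewrite inord_val.
- move=> [G [[inj ed] ->]]; apply/existsP; exists [ffun j : 'I_k.+1 => G j].
  apply/and3P; split.
  + apply/injectiveP => a b; rewrite !ffunE => /inj H; apply: val_inj; exact: H.
  + apply/eqP; apply: eq_imset => j; by rewrite ffunE.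
  + apply/forallP => i; apply/forallP => j; by rewrite !ffunE ed.
Qed.

Lemma pathfun_card (T : finType) (e : rel T) G k :
  pathfun e G k -> #|[set G (nat_of_ord j) | j in [set: 'I_k]]| = k.
Proof.
move=> [inj _]; rewrite card_imset ?cardsT ?card_ord //.
move=> a b /inj H; apply: val_inj; exact: H.
Qed.

Lemma pathfun_conn (T : finType) (e : rel T) G k :
  pathfun e G k -> 0 < k -> [set G (nat_of_ord j) | j in [set: 'I_k]] \subset compo e (G 0).
Proof.
move=> [_ ed] k0; apply/subsetP => y /imsetP [j _ ->]; rewrite /compo in_set.
have : nat_of_ord j < k := ltn_ord j.
elim: (nat_of_ord j) => [|i IH] hi; first exact: connect0.
apply: connect_trans (IH (ltnW hi)) (connect1 _).
by rewrite ed // ?eqxx //; apply: ltnW.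
Qed.

Definition carc (T : finType) (c : nat -> T) k i := [set c (i + nat_of_ord j) | j in [set: 'I_k]].


Lemma c_eq (T : finType) (e : rel T) C m c (Hc : cyc e C m c) a b : a = b %[mod m] -> c a = c b.
Proof. by case: Hc => _ P1 _ _ H; apply/eqP; rewrite P1 H. Qed.

Lemma c_shift (T : finType) (e : rel T) C m c (Hc : cyc e C m c) a t : c (a + t * m) = c a.
Proof. by apply: (c_eq Hc); rewrite addnC modnMDl. Qed.

Lemma c_inj_small (T : finType) (e : rel T) C m c (Hc : cyc e C m c) a b :
  a < m -> b < m -> c a = c b -> a = b.
Proof. by case: Hc => _ P1 _ _ ha hb /eqP; rewrite P1 !modn_small // => /eqP. Qed.

Lemma c_in (T : finType) (e : rel T) C m c (Hc : cyc e C m c) a : c a \in C.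
Proof.
have m0 : 0 < m by case: Hc => ? _ _ _; lia.
have := Hc; case => _ _ _ ->; apply/imsetP; exists (Ordinal (ltn_pmod a m0)); first by rewrite inE.
by apply: (c_eq Hc); rewrite /= modn_mod.
Qed.

Lemma in_c (T : finType) (e : rel T) C m c (Hc : cyc e C m c) y : y \in C -> exists2 i, i < m & y = c i.
Proof. by case: Hc => _ _ _ -> /imsetP [i _ ->]; exists i. Qed.

Lemma c_card (T : finType) (e : rel T) C m c (Hc : cyc e C m c) : #|C| = m.
Proof.
have := Hc; case => _ _ _ ->; rewrite card_imset ?cardsT ?card_ord //.
move=> a b /(c_inj_small Hc (ltn_ord a) (ltn_ord b)) H; exact: val_inj.
Qed.

Lemma nbr_d (T : finType) (e : rel T) C m c (Hc : cyc e C m c) d x y :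
  d = 1 \/ d = m.-1 -> e (c (x + d)) y -> y = c x \/ y = c (x + d + d).
Proof.
have m0 : 2 < m by case: Hc.
have := Hc; case => _ _ P2 _; move=> hd; rewrite P2 => /orP [] /eqP ->; case: hd => hd; subst d.
- by right; congr c; lia.
- by left; rewrite (_ : (x + m.-1).+1 = x + 1 * m) ?(c_shift Hc) //; lia.
- by left; rewrite (_ : x + 1 + m.-1 = x + 1 * m) ?(c_shift Hc) //; lia.
- by right.
Qed.

Lemma arc_ind (T : finType) (e : rel T) C m c (Hc : cyc e C m c) k i :
  0 < k -> k < m -> induced_iso e (carc c k i) (path_rel k).
Proof.
move=> k0 km; apply/(induced_pathP _ _ k0); exists (fun n => c (i + n)); split => //.
case: Hc => m2 P1 P2 _; split.
- move=> a b ha hb /eqP; rewrite P1 eqn_modDl !modn_small; [move/eqP|lia|lia] => //.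
- move=> a b ha hb; rewrite P2 !P1 -addnS eqn_modDl -addnA eqn_modDl.
  rewrite (modn_small (_ : b < m)); last lia.
  rewrite (modn_small (_ : a.+1 < m)); last lia.
  rewrite modP_if; last lia.
  rewrite (modn_small (_ : a < m)); last lia.
  case: ifP => H; lia.
Qed.

Lemma arc_sub (T : finType) (e : rel T) C m c (Hc : cyc e C m c) k i : carc c k i \subset C.
Proof. by apply/subsetP => y /imsetP [j _ ->]; apply: (c_in Hc). Qed.

Lemma arc_card (T : finType) (c : nat -> T) k i : #|carc c k i| <= k.
Proof. by apply: leq_trans (leq_imset_card _ _) _; rewrite cardsT card_ord. Qed.

Lemma arc_mod (T : finType) (e : rel T) C m c (Hc : cyc e C m c) k i : carc c k (i %% m) = carc c k i.
Proof. by apply: eq_imset => j; apply: (c_eq Hc); rewrite modnDml. Qed.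

Lemma arc_inj (T : finType) (e : rel T) C m c (Hc : cyc e C m c) k i i' :
  0 < k -> k < m -> i < m -> i' < m -> carc c k i = carc c k i' -> i = i'.
Proof.
move=> k0 km hi hi' E.
have : c i \in carc c k i' by rewrite -E; apply/imsetP; exists (Ordinal k0); rewrite ?inE // addn0.
case/imsetP => [[d hd] _ /= Hd].
case: (posnP d) => [d0| dp].
  by subst; rewrite addn0 in Hd; apply: (c_inj_small Hc).
exfalso.
have := Hc; case => m2 P1 _ _.
have : c (i + m.-1) \in carc c k i'.
  apply/imsetP; exists (Ordinal (leq_ltn_trans (leq_pred d) hd)); first by rewrite inE.
  apply: (c_eq Hc) => /=; move/eqP: Hd; rewrite P1 => /eqP Hd.
  rewrite -modnDml Hd modnDml (_ : i' + d + m.-1 = i' + d.-1 + m) ?modnDr //; lia.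
rewrite -E => /imsetP [[j hj] _ /=] /eqP; rewrite P1 eqn_modDl.
rewrite (modn_small (_ : j < m)); last lia.
rewrite modn_small; [move/eqP|]; lia.
Qed.

Lemma arith1 i0 j K M : j <= K ->
  i0 + j * M + K * M.+1 = i0 + K * M + (K - j) + j * M.+1.
Proof.
move=> hj; rewrite -(subnKC hj); set r := K - j.
rewrite (_ : j + r - j = r); last lia.
rewrite !mulnDl !mulnS; lia.
Qed.

Lemma arc_all (T : finType) (e : rel T) C m c (Hc : cyc e C m c) k X :
  0 < k -> induced_iso e X (path_rel k) -> X \subset C -> exists i : 'I_m, X = carc c k i.
Proof.
move=> k0 /(induced_pathP _ _ k0) [G [[inj ed] XE]] sub.
have := Hc; case => m2 P1 P2 _.
have m0 : 0 < m by lia.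
have G0C : G 0 \in C.
  by rewrite (subsetP sub) // XE; apply/imsetP; exists (Ordinal k0); rewrite ?inE.
case: (in_c Hc G0C) => i0 _ Hi0.
have claim : forall d, (d = 1 \/ d = m.-1) -> G 1 = c (i0 + d) ->
    forall j, j < k -> G j = c (i0 + j * d).
  move=> d hd H1.
  suff H : forall j, j.+1 < k -> G j = c (i0 + j * d) /\ G j.+1 = c (i0 + j.+1 * d).
    move=> j hj; case: j hj => [|j] hj; first by rewrite mul0n addn0.
    by case: (H j hj).
  elim => [|j IH] hj; first by rewrite mul0n addn0 mul1n.
  case: (IH (ltnW hj)) => Hj Hj1; split => //.
  have : e (G j.+1) (G j.+2) by rewrite ed ?eqxx //; lia.
  rewrite Hj1 (_ : i0 + j.+1 * d = (i0 + j * d) + d); last by rewrite mulSn; lia.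
  move/(nbr_d Hc hd) => [H | H].
  - exfalso; have := inj j j.+2; rewrite Hj H => /(_ _ _ erefl); lia.
  - by rewrite H (_ : i0 + j * d + d + d = i0 + j.+2 * d) // !mulSn; lia.
have [d [hd Gd]] : exists d, (d = 1 \/ d = m.-1) /\ forall j, j < k -> G j = c (i0 + j * d).
  case: (ltnP 1 k) => k1.
  - have : e (G 0) (G 1) by rewrite ed.
    rewrite Hi0 P2 => /orP [] /eqP H1.
    + exists 1; split; first by left.
      by apply: claim; [left | rewrite H1 addn1].
    + exists m.-1; split; first by right.
      by apply: claim; [right | rewrite H1].
  - exists 1; split; first by left.
    move=> j hj; have -> : j = 0 by lia.
    by rewrite Hi0 mul0n addn0.
have [i Hi] : exists i, forall j, j < k -> exists2 j', j' < k & G j = c (i + j').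
  case: hd => hd; subst d.
  - by exists i0 => j hj; exists j => //; rewrite Gd // muln1.
  - exists (i0 + k.-1 * m.-1) => j hj; exists (k.-1 - j); first lia.
    rewrite Gd // -(c_shift Hc (i0 + j * m.-1) k.-1).
    rewrite -(c_shift Hc (i0 + k.-1 * m.-1 + (k.-1 - j)) j).
    have mE : m = m.-1.+1 by lia.
    rewrite mE arith1 //; lia.
exists (Ordinal (ltn_pmod i m0)); rewrite /= (arc_mod Hc).
apply/eqP; rewrite eqEcard; apply/andP; split.
- apply/subsetP => y; rewrite XE => /imsetP [j _ ->].
  case: (Hi j (ltn_ord j)) => j' hj' ->.
  by apply/imsetP; exists (Ordinal hj') => //; rewrite inE.
- by rewrite XE (pathfun_card (conj inj ed)) arc_card.
Qed.

Lemma nok (T : finType) (e : rel T) C m c (Hc : cyc e C m c) k X :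
  0 < k -> m = k -> induced_iso e X (path_rel k) -> X \subset C -> False.
Proof.
move=> k0 mk /(induced_pathP _ _ k0) [G [[inj ed] XE]] sub.
have := Hc; case => m2 P1 P2 _.
have XC : X = C.
  apply/eqP; rewrite eqEcard sub /= (c_card Hc) XE (pathfun_card (conj inj ed)) mk //.
have G0C : G 0 \in C by rewrite -XC XE; apply/imsetP; exists (Ordinal k0); rewrite ?inE.
case: (in_c Hc G0C) => i0 _ Hi0.
have nb : forall y, e (G 0) y -> y = G 1.
  move=> y hy.
  have : y \in X.
    rewrite XC; move: hy; rewrite Hi0 P2 => /orP [] /eqP ->; exact: (c_in Hc).
  rewrite XE => /imsetP [j _ Ej]; subst y.
  move: hy; rewrite ed //; case/orP => /eqP Hj; [by rewrite -Hj | by []].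
have h1 := nb (c i0.+1); have h2 := nb (c (i0 + m.-1)).
rewrite Hi0 P2 eqxx in h1; rewrite Hi0 P2 eqxx orbT in h2.
have := h1 isT; rewrite -(h2 isT) => /eqP; rewrite P1 -addn1 eqn_modDl.
rewrite !modn_small; [move/eqP|lia|lia]; lia.
Qed.

Lemma count_arcs (T : finType) (e : rel T) C m c (Hc : cyc e C m c) k :
  0 < k -> k < m -> #|[set X : {set T} | induced_iso e X (path_rel k) && (X \subset C)]| = m.
Proof.
move=> k0 km.
have -> : [set X : {set T} | induced_iso e X (path_rel k) && (X \subset C)] =
          [set carc c k (nat_of_ord i) | i in [set: 'I_m]].
  apply/setP => X; rewrite inE; apply/andP/imsetP.
  - by move=> [h1 h2]; case: (arc_all Hc k0 h1 h2) => i ->; exists i; rewrite ?inE.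
  - by move=> [i _ ->]; split; [exact: (arc_ind Hc) | exact: (arc_sub Hc)].
rewrite card_imset ?cardsT ?card_ord //.
move=> i j /(arc_inj Hc k0 km (ltn_ord i) (ltn_ord j)) H; exact: val_inj.
Qed.

Lemma cyc_cycle (T : finType) (e : rel T) C m c : cyc e C m c -> is_cycle_set e C.
Proof.
move=> Hc; have := Hc; case => m2 P1 P2 CE.
rewrite /is_cycle_set (c_card Hc) m2 /=.
apply/existsP; exists [ffun i : 'I_m => c i]; apply/and3P; split.
- apply/injectiveP => a b; rewrite !ffunE => /(c_inj_small Hc (ltn_ord a) (ltn_ord b)) H.
  exact: val_inj.
- by rewrite CE; apply/eqP; apply: eq_imset => i; rewrite ffunE.
- apply/forallP => i; apply/forallP => j; rewrite !ffunE P2 !P1 /cycle_rel.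
  have hi := ltn_ord i; have hj := ltn_ord j.
  rewrite !modS_if ?modP_if; try lia.
  rewrite !(modn_small hi) !(modn_small hj).
  apply/eqP; case: ifP => H1; case: ifP => H2; try case: ifP => H3; lia.
Qed.

Theorem lemma4p4 (T : finType) (e : rel T) (k : nat) :
  symmetric e -> irreflexive e ->
  max_degree_two e ->
  0 < k ->
  (forall C, C \in components e -> is_path_set e C -> #|C| < k.-1) ->
  0 < s_path e k <= 2 * k + 1 ->
  exists C, [/\ C \in components e, k < #|C|, is_cycle_set e C,
              #|C| = s_path e k &
              forall D, D \in components e -> k < #|D| -> D = C].
Proof.
move=> sym irr [deg _] k0 hpath /andP [s0 s2].
rewrite /s_path in s0 s2 *.
set S := [set X : {set T} | induced_iso e X (path_rel k)] in s0 s2 *.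
have compP : forall x, compo e x \in components e by move=> x; apply/imsetP; exists x.
have inc : forall D, D \in components e -> exists x, D = compo e x.
  by move=> D /imsetP [x _ ->]; exists x.
have cmp_eq : forall x z, z \in compo e x -> compo e x = compo e z.
  move=> x z; rewrite /compo in_set => hxz; apply/setP => w; rewrite !in_set.
  by rewrite (same_connect (sym_connect_sym sym) hxz).
have big : forall D, D \in components e -> k < #|D| -> exists c, cyc e D #|D| c.
  move=> D /inc [x ->] hk; case: (classify x sym irr deg) => // hp.
  have := hpath _ (compP x) hp; lia.
have Sfacts : forall X, X \in S ->
    exists x, [/\ X \subset compo e x, k < #|compo e x| & X != set0].
  move=> X; rewrite inE => hX; have := hX; move/(induced_pathP _ _ k0) => [G [pf XE]].
  have sub : X \subset compo e (G 0) by rewrite XE; exact: pathfun_conn.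
  exists (G 0); split => //.
  - have := subset_leq_card sub; rewrite XE (pathfun_card pf) => hle.
    case: (classify (G 0) sym irr deg) => [hp | [c Hc]].
    + have := hpath _ (compP _) hp; lia.
    + rewrite ltn_neqAle hle andbT; apply/eqP => Ek.
      exact: (nok Hc k0 (esym Ek) hX sub).
  - by apply/set0Pn; exists (G 0); rewrite XE; apply/imsetP; exists (Ordinal k0); rewrite ?inE.
rewrite card_gt0 in s0; case/set0Pn: s0 => X0 XS0.
case: (Sfacts X0 XS0) => x [sub0 kx _].
set C := compo e x.
have [c Hc] := big C (compP x) kx.
have SD : forall D c', cyc e D #|D| c' -> k < #|D| -> #|[set X in S | X \subset D]| = #|D|.
  move=> D c' Hc' hk; rewrite -(count_arcs Hc' k0 hk).
  by apply: eq_card => X; rewrite !inE.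
have uniqC : forall D, D \in components e -> k < #|D| -> D = C.
  move=> D hD hkD; apply/eqP/negPn/negP => nDC.
  have [c' Hc'] := big D hD hkD.
  have I0 : [set X in S | X \subset C] :&: [set X in S | X \subset D] = set0.
    apply/setP => X; rewrite !inE; apply/negbTE/negP => /and3P [/andP [XS XC] _ XD].
    have XS' : X \in S by rewrite inE.
    case: (Sfacts X XS') => _ [_ _ /set0Pn [z zX]].
    case/inc: hD => y Dy.
    have zC : z \in C := subsetP XC z zX.
    have zD : z \in D := subsetP XD z zX.
    move: nDC; rewrite Dy /C (cmp_eq _ _ zC) -(cmp_eq y z) ?eqxx //.
    by rewrite -Dy.
  have : #|[set X in S | X \subset C] :|: [set X in S | X \subset D]| <= #|S|.
    by apply: subset_leq_card; apply/subsetP => X; rewrite !inE => /orP [] /andP [].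
  rewrite cardsU I0 cards0 subn0 (SD _ _ Hc kx) (SD _ _ Hc' hkD); have kC : k < #|C| := kx; lia.
exists C; split.
- exact: compP.
- exact: kx.
- exact: (cyc_cycle Hc).
- rewrite -(SD _ _ Hc kx); apply: eq_card => X; rewrite !inE.
  apply/andP/idP => [[] //|XS]; split => //.
  have XS' : X \in S by rewrite inE.
  case: (Sfacts X XS') => y [sub hy _].
  by rewrite -(uniqC _ (compP y) hy).
- exact: uniqC.
Qed.
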